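(* Let $\mathbb{F}$ be a field and let $n>4$ be an integer. If $\mathcal{A}$ is a unital $\mathbb{F}$-algebra with $\dim\mathcal{A}=n$ and $l(\mathcal{A})>2^{n-3}$, then $l(\mathcal{A})=2^{n-3}+2^{p}$ for some $p\in\{0,\ldots,n-3\}$.
   Context: All algebras are finite-dimensional, unital, not necessarily associative algebras over the field $\mathbb{F}$. For a finite generating set $S$ of an algebra $\mathcal{A}$, a word in $S$ is any product (with any bracketing) of finitely many elements of $S$; its length is the number of factors, and $1$ is a word of length $0$. $L_i(S)$ is the linear span of all words in $S$ of length at most $i$. The length of $S$ is $l(S)=\min\{k\ge0: L_k(S)=\mathcal{A}\}$, and $l(\mathcal{A})=\max\{l(S): S\text{ a finite generating set of }\mathcal{A}\}$. *)

(* Defs.v *)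
From HB Require Import structures.
From mathcomp Require Import all_boot all_order all_algebra.
Set Implicit Arguments. Unset Strict Implicit. Unset Printing Implicit Defensive.
Import GRing.Theory.
Local Open Scope ring_scope.

(* A unital, not necessarily associative, algebra of dimension n over the
   field F, realised on the coordinate space 'rV[F]_n (any n-dimensional
   F-algebra is isomorphic to one of these). *)
Record unital_algebra (F : fieldType) (n : nat) := UnitalAlgebra {
  amul : 'rV[F]_n -> 'rV[F]_n -> 'rV[F]_n;
  aone : 'rV[F]_n;
  amulDl : forall (a : F) (x y z : 'rV[F]_n),
      amul (a *: x + y) z = a *: amul x z + amul y z;
  amulDr : forall (a : F) (x y z : 'rV[F]_n),
      amul x (a *: y + z) = a *: amul x y + amul x z;
  amul1l : forall x, amul aone x = x;
  amul1r : forall x, amul x aone = x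
}.

Inductive word : Type :=
| WGen of nat
| WMul of word & word.

Fixpoint wlen (w : word) : nat :=
  match w with WGen _ => 1%N | WMul u v => (wlen u + wlen v)%N end.

Fixpoint wvalid (m : nat) (w : word) : bool :=
  match w with WGen i => (i < m)%N | WMul u v => wvalid m u && wvalid m v end.

Fixpoint weval (F : fieldType) (n : nat) (A : unital_algebra F n)
    (S : seq 'rV[F]_n) (w : word) : 'rV[F]_n :=
  match w with
  | WGen i => nth 0 S i
  | WMul u v => amul A (weval A S u) (weval A S v)
  end.

Definition is_word_le (F : fieldType) (n : nat) (A : unital_algebra F n)
    (S : seq 'rV[F]_n) (k : nat) (x : 'rV[F]_n) : Prop :=
  x = aone A \/
  exists w : word, [/\ wvalid (size S) w, (wlen w <= k)%N & x = weval A S w].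

Definition in_L (F : fieldType) (n : nat) (A : unital_algebra F n)
    (S : seq 'rV[F]_n) (k : nat) (x : 'rV[F]_n) : Prop :=
  exists ws : seq 'rV[F]_n,
    (forall y, y \in ws -> is_word_le A S k y) /\ x \in <<ws>>%VS.

Definition L_full (F : fieldType) (n : nat) (A : unital_algebra F n)
    (S : seq 'rV[F]_n) (k : nat) : Prop :=
  forall x : 'rV[F]_n, in_L A S k x.

Definition generates (F : fieldType) (n : nat) (A : unital_algebra F n)
    (S : seq 'rV[F]_n) : Prop :=
  exists k, L_full A S k.

Definition set_length (F : fieldType) (n : nat) (A : unital_algebra F n)
    (S : seq 'rV[F]_n) (k : nat) : Prop :=
  L_full A S k /\ forall j, (j < k)%N -> ~ L_full A S j.

Definition alg_length (F : fieldType) (n : nat) (A : unital_algebra F n)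
    (m : nat) : Prop :=
  (exists S, generates A S /\ set_length A S m) /\
  (forall S k, generates A S -> set_length A S k -> (k <= m)%N).

(* Main.v *)
Require Import Defs.
From mathcomp Require Import all_boot all_order all_algebra.
From mathcomp Require Import zify.
From Stdlib Require Import Classical_Prop.
Set Implicit Arguments. Unset Strict Implicit.
Import GRing.Theory.

Definition cnt (J : nat -> bool) k := count J (iota 0 k.+1).

Lemma cntS (J : nat -> bool) k : cnt J k.+1 = cnt J k + J k.+1.
Proof. by rewrite /cnt -(addn1 k.+1) iotaD count_cat /= addn0. Qed.

Lemma cnt_mono (J : nat -> bool) i j : i <= j -> cnt J i <= cnt J j.
Proof.
elim: j => [|j IH]; first by rewrite leqn0 => /eqP ->.
rewrite leq_eqVlt => /orP [/eqP -> //| ]; rewrite ltnS => /IH.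
rewrite cntS; lia.
Qed.

Lemma cnt_lt (J : nat -> bool) i k : i < k -> J k -> cnt J i < cnt J k.
Proof.
case: k => // k; rewrite ltnS => /(cnt_mono J) h Jk.
rewrite cntS Jk; lia.
Qed.

Lemma cnt_pos (J : nat -> bool) k : J k -> 0 < cnt J k.
Proof.
case: k => [|k] Jk; first by rewrite /cnt /= Jk.
rewrite cntS Jk; lia.
Qed.

Lemma e2S x : 2 ^ x.+1 = 2 * 2 ^ x. Proof. by rewrite expnS. Qed.

Lemma comb (J : nat -> bool) : J 0 = false ->
  (forall k, 2 <= k -> J k -> exists a b, [/\ 0 < a, 0 < b, J a, J b & a + b = k]) ->
  forall k, J k ->
  [/\ k <= 2 ^ (cnt J k).-1,
      (k = 2 ^ (cnt J k).-1 -> forall i, i <= k -> J i -> i = 2 ^ (cnt J i).-1) &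
      (2 ^ (cnt J k).-2 < k -> exists2 p, p <= (cnt J k).-2 & k = 2 ^ (cnt J k).-2 + 2 ^ p)].
Proof.
move=> J0 Hs k.
have [N] := ubnP k; elim: N k => // N IH k; rewrite ltnS => kN Jk.
have k0 : k != 0 by apply: contraTneq Jk => ->; rewrite J0.
case: (leqP k 1) => k1.
  have k1' : k = 1 by lia.
  subst k.
  have c1 : cnt J 1 = 1 by rewrite /cnt /= J0 Jk.
  rewrite c1; split => //.
  move=> _ i; rewrite leq_eqVlt => /orP [/eqP -> _| ]; first by rewrite c1.
  by rewrite ltnS leqn0 => /eqP ->; rewrite J0.
have [a [b [a0 ab Ja Jb abk]]] : exists a b, [/\ 0 < a, a <= b, J a, J b & a + b = k].
  have [a [b [a0 b0 Ja Jb abk]]] := Hs k k1 Jk.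
  case: (leqP a b) => h; first by exists a, b.
  by exists b, a; split => //; [lia | rewrite addnC].
have bk : b < k by lia.
have ak : a < k by lia.
have [IHb1 IHb2 IHb3] := IH b (leq_trans bk kN) Jb.
have [IHa1 IHa2 IHa3] := IH a (leq_trans ak kN) Ja.
have cbC := cnt_lt bk Jk.
have caC := cnt_lt ak Jk.
have cacb := cnt_mono J ab.
have ca0 := cnt_pos Ja.
have cb0 := cnt_pos Jb.
move: IHb1 IHb2 IHb3 IHa1 IHa2 IHa3 cbC caC cacb ca0 cb0.
have lbC : forall i, i <= b -> cnt J i <= cnt J b by move=> i; apply: cnt_mono.
move: lbC.
set C := cnt J k; set cb := cnt J b; set ca := cnt J a.
move=> lbC IHb1 IHb2 IHb3 IHa1 IHa2 IHa3 cbC caC cacb ca0 cb0.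
have ecb : 2 ^ cb = 2 * 2 ^ cb.-1 by rewrite -e2S prednK.
have eA : 2 ^ cb <= 2 ^ C.-1 by rewrite leq_exp2l //; lia.
have A1 : k <= 2 ^ C.-1 by lia.
split => //.
- move=> kC i ik Ji.
  have eq1 : 2 ^ cb = 2 ^ C.-1 by lia.
  have cbe : cb = C.-1 by apply/eqP; rewrite -(eqn_exp2l _ _ (isT : 1 < 2)) eq1.
  have bp : b = 2 ^ cb.-1 by lia.
  case: (leqP i b) => ib; first exact: IHb2.
  case: (eqVneq i k) => [-> | ik']; first exact: kC.
  have ik2 : i < k by lia.
  have := cnt_lt ik2 Jk; have := cnt_lt ib Ji; rewrite -/C -/cb; lia.
- move=> kbig.
  have cbC1 : cb = C.-1.
    case: (leqP cb C.-2) => h; last by lia.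
    have : 2 ^ cb <= 2 ^ C.-2 by rewrite leq_exp2l.
    lia.
  case: (leqP C 2) => C2.
    exists 0; first by lia.
    have -> : C.-2 = 0 by lia.
    have : 2 ^ C.-1 <= 2 ^ 1 by rewrite leq_exp2l //; lia.
    rewrite expn0; lia.
  have [E CE] : exists E, C = E.+3 by exists (C - 3); lia.
  rewrite CE /= in cbC1 *.
  rewrite CE /= in kbig.
  have cbE : cb = E.+2 by lia.
  rewrite cbE /= in IHb1 IHb2 IHb3.
  have e1 := e2S E.+1; have e0 := e2S E.
  case: (eqVneq a b) => [aeb | anb].
    have : 2 ^ E < b by lia.
    case/IHb3 => q qE bq.
    exists q.+1; first by lia.
    have := e2S q; lia.
  have altb : a < b by lia.
  have cab : ca < cb by exact: cnt_lt altb Jb.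
  have ca1 : 2 ^ ca.-1 <= 2 ^ E by rewrite leq_exp2l //; lia.
  have : 2 ^ E < b by lia.
  case/IHb3 => q qE bq.
  case: (eqVneq q E) => [qeE | qnE].
    have bpow : b = 2 ^ E.+1 by rewrite e0 bq qeE; lia.
    have ap := IHb2 bpow a ab Ja.
    exists ca.-1; first by lia.
    rewrite -abk ap bq qeE -/ca; have := e2S E; have : ca.-1 = ca.-1 by []; lia.
  have [G EG] : exists G, E = G.+1 by exists E.-1; lia.
  subst E.
  have qG : 2 ^ q <= 2 ^ G by rewrite leq_exp2l //; lia.
  have eG := e2S G.
  have aG : 2 ^ G < a by lia.
  have caG : ca = G.+2.
    case: (leqP ca G.+1) => h; last by lia.
    have : 2 ^ ca.-1 <= 2 ^ G by rewrite leq_exp2l //; lia.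
    lia.
  rewrite caG /= in IHa3.
  case/IHa3: aG => s0 sG aq.
  case: (eqVneq q G) => [qeG | qnG].
    exists s0; first by lia.
    rewrite -abk aq bq qeG; lia.
  case: (eqVneq s0 G) => [seG | snG].
    exists q; first by lia.
    rewrite -abk aq bq seG; lia.
  have q1 : 2 ^ q.+1 <= 2 ^ G by rewrite leq_exp2l //; lia.
  have s1 : 2 ^ s0.+1 <= 2 ^ G by rewrite leq_exp2l //; lia.
  have := e2S q; have := e2S s0.
  lia.
Qed.


Section Alg.
Local Open Scope ring_scope.
Variables (F : fieldType) (n : nat) (A : unital_algebra F n) (S : seq 'rV[F]_n).
Local Notation amul := (amul A).
Local Notation aone := (aone A).

Lemma amul0l z : amul 0 z = 0.
Proof.
have := amulDl A 1 0 0 z; rewrite scaler0 addr0 scale1r => h.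
by have := congr1 (fun t => t - amul 0 z) h; rewrite subrr addrK.
Qed.
Lemma amul0r z : amul z 0 = 0.
Proof.
have := amulDr A 1 z 0 0; rewrite scaler0 addr0 scale1r => h.
by have := congr1 (fun t => t - amul z 0) h; rewrite subrr addrK.
Qed.
Lemma amulDl' x y z : amul (x + y) z = amul x z + amul y z.
Proof. by have := amulDl A 1 x y z; rewrite !scale1r. Qed.
Lemma amulDr' x y z : amul z (x + y) = amul z x + amul z y.
Proof. by have := amulDr A 1 z x y; rewrite !scale1r. Qed.
Lemma amulZl a x z : amul (a *: x) z = a *: amul x z.
Proof. by have := amulDl A a x 0 z; rewrite !addr0 amul0l addr0. Qed.
Lemma amulZr a x z : amul z (a *: x) = a *: amul z x.
Proof. by have := amulDr A a z x 0; rewrite !addr0 amul0r addr0. Qed.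

Lemma amul_suml k (f : 'I_k -> 'rV[F]_n) z :
  amul (\sum_i f i) z = \sum_i amul (f i) z.
Proof.
apply: (big_rec2 (fun s t => amul s z = t)); first exact: amul0l.
by move=> i y1 y2 _ <-; rewrite amulDl'.
Qed.
Lemma amul_sumr k (f : 'I_k -> 'rV[F]_n) z :
  amul z (\sum_i f i) = \sum_i amul z (f i).
Proof.
apply: (big_rec2 (fun s t => amul z s = t)); first exact: amul0r.
by move=> i y1 y2 _ <-; rewrite amulDr'.
Qed.

Lemma mul_span (X Y : seq 'rV[F]_n) (U : {vspace 'rV[F]_n}) x y :
  (forall g h, g \in X -> h \in Y -> amul g h \in U) ->
  x \in <<X>>%VS -> y \in <<Y>>%VS -> amul x y \in U.
Proof.
move=> H Hx Hy.
rewrite (coord_span (X := in_tuple X) Hx) (coord_span (X := in_tuple Y) Hy).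
rewrite amul_suml; apply: memv_suml => i _; rewrite amulZl; apply: memvZ.
rewrite amul_sumr; apply: memv_suml => j _; rewrite amulZr; apply: memvZ.
by apply: H; apply: mem_nth.
Qed.

Fixpoint wl (k : nat) : seq (nat * 'rV[F]_n) :=
  match k with
  | 0 => [::]
  | k'.+1 => [seq (1%N, s) | s <- S] ++
      [seq pq <- [seq ((p.1 + q.1)%N, amul p.2 q.2) | p <- wl k', q <- wl k']
        | (pq.1 <= k'.+1)%N]
  end.

Lemma wlen_gt0 w : (0 < wlen w)%N.
Proof. elim: w => //= u IHu v IHv; lia. Qed.

Lemma wl_sound k l x : (l, x) \in wl k ->
  exists w, [/\ wvalid (size S) w, wlen w = l, (l <= k)%N & x = weval A S w].
Proof.
elim: k l x => // k IH l x /=; rewrite mem_cat => /orP [].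
  case/mapP => s sS [-> ->]; exists (WGen (index s S)); split => //=.
  - by rewrite index_mem.
  - by rewrite nth_index.
rewrite mem_filter /= => /andP [lk /allpairsP [[[l1 x1] [l2 x2]] /= [h1 h2 [el ex]]]]; subst l x.
have [w1 [v1 e1 k1 ->]] := IH _ _ h1.
have [w2 [v2 e2 k2 ->]] := IH _ _ h2.
exists (WMul w1 w2); split => //=; first by rewrite v1 v2.
by rewrite e1 e2.
Qed.

Lemma wl_complete w k : wvalid (size S) w -> (wlen w <= k)%N ->
  (wlen w, weval A S w) \in wl k.
Proof.
elim: w k => [i|u IHu v IHv] [|k] //=.
  move=> iS _; rewrite mem_cat; apply/orP; left.
  by apply/mapP; exists (nth 0 S i) => //; apply: mem_nth.
  by have := wlen_gt0 u; lia.
move=> /andP [vu vv] hk; rewrite mem_cat; apply/orP; right.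
rewrite mem_filter /= hk /=.
have := wlen_gt0 u; have := wlen_gt0 v => hv hu.
apply/allpairsP; exists ((wlen u, weval A S u), (wlen v, weval A S v)); split => //.
  by apply: IHu => //; lia.
by apply: IHv => //; lia.
Qed.

Definition gens k := aone :: [seq p.2 | p <- wl k].
Definition V k : {vspace 'rV[F]_n} := <<gens k>>%VS.

Lemma gens_word k g : g \in gens k -> is_word_le A S k g.
Proof.
rewrite inE => /orP [/eqP -> | /mapP [[l z] /wl_sound [w [v e lk ->]] ->]].
  by left.
by right; exists w; split => //; rewrite e.
Qed.

Lemma word_V k g : is_word_le A S k g -> g \in V k.
Proof.
case => [-> | [w [v lk ->]]]; apply: memv_span; rewrite inE ?eqxx //.
apply/orP; right; apply/mapP; exists (wlen w, weval A S w) => //.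
exact: wl_complete.
Qed.

Lemma inL_V k x : in_L A S k x -> x \in V k.
Proof.
case=> ws [Hws Hx].
have sub : (<<ws>> <= V k)%VS by apply/span_subvP => y /Hws; apply: word_V.
exact: (subvP sub).
Qed.

Lemma V_inL k x : x \in V k -> in_L A S k x.
Proof. by move=> Hx; exists (gens k); split => // y /gens_word. Qed.

Lemma V_mono i j : (i <= j)%N -> (V i <= V j)%VS.
Proof.
move=> ij; apply/span_subvP => g /gens_word [-> | [w [v lk ->]]]; apply: word_V.
  by left.
by right; exists w; split => //; apply: leq_trans ij.
Qed.

Lemma V_mul a b x y : x \in V a -> y \in V b -> amul x y \in V (a + b).
Proof.
apply: mul_span => g h /gens_word [-> | [u [vu lu ->]]].
  by rewrite amul1l => /gens_word /word_V; apply: (subvP (V_mono (leq_addl a b))).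
move=> /gens_word [-> | [v [vv lv ->]]].
  rewrite amul1r; apply: (subvP (V_mono (leq_addr b a))).
  by apply: word_V; right; exists u.
apply: word_V; right; exists (WMul u v); split => //=; first by rewrite vu vv.
exact: leq_add.
Qed.


Definition J k : bool := V k != V k.-1.

Lemma J0 : J 0 = false.
Proof. by rewrite /J eqxx. Qed.

Lemma red a : exists a', [/\ (a' <= a)%N, V a' = V a & (a' == 0%N) || J a'].
Proof.
elim: a => [|a [a' [h1 h2 h3]]]; first by exists 0%N.
case Ja: (J a.+1); first by exists a.+1; rewrite Ja orbT.
exists a'; split => //; first exact: leqW.
by move/negbFE: Ja => /eqP ->.
Qed.

Lemma Jsplit k : (2 <= k)%N -> J k ->
  exists a b, [/\ (0 < a)%N, (0 < b)%N, J a, J b & (a + b)%N = k].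
Proof.
move=> k2 Jk; apply: NNPP => H; move: Jk; rewrite /J; apply/negP/negPn.
rewrite eqEsubv (V_mono (leq_pred k)) andbT.
apply/span_subvP => g /gens_word [-> | [w [vw lw ->]]].
  by apply: word_V; left.
case: (leqP (wlen w) k.-1) => hl.
  by apply: word_V; right; exists w.
case: w vw lw hl => [i|u v] /=; first by lia.
move=> /andP [vu vv] lw hl.
have lu := wlen_gt0 u; have lv := wlen_gt0 v.
have [u' [u1 u2 u3]] := red (wlen u).
have [v' [v1 v2 v3]] := red (wlen v).
have Hu : weval A S u \in V u' by rewrite u2; apply: word_V; right; exists u.
have Hv : weval A S v \in V v' by rewrite v2; apply: word_V; right; exists v.
have Hp := V_mul Hu Hv.
apply: (subvP (V_mono _)) Hp.
case: (eqVneq u' (wlen u)) => eu; last by lia.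
case: (eqVneq v' (wlen v)) => ev; last by lia.
exfalso; apply: H; exists (wlen u), (wlen v); split => //; try lia.
  by move: u3; rewrite eu; case: (wlen u) lu.
by move: v3; rewrite ev; case: (wlen v) lv.
Qed.

Lemma count_dim k : (\dim (V 0) + cnt J k <= \dim (V k))%N.
Proof.
elim: k => [|k IH]; first by rewrite /cnt /= J0 !addn0.
rewrite cntS; case Jk: (J k.+1); last first.
  by rewrite addn0 (leq_trans IH) // dimvS // V_mono.
have : ~~ (V k == V k.+1) by rewrite eq_sym; exact: Jk.
rewrite eqEdim V_mono //= -ltnNge => h; lia.
Qed.

End Alg.


Section One.
Local Open Scope ring_scope.
Lemma aone_neq0 (F : fieldType) (n : nat) (A : unital_algebra F n) :
  (0 < n)%N -> aone A != 0%R.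
Proof.
move=> n0; apply/eqP => h.
have := amul1l A (const_mx 1); rewrite h amul0l => /matrixP /(_ 0 (Ordinal n0)).
by rewrite !mxE => /eqP; rewrite eq_sym oner_eq0.
Qed.

End One.

Theorem corollary4p7 (F : fieldType) (n : nat) (A : unital_algebra F n)
    (m : nat) :
  (4 < n)%N -> alg_length A m -> (2 ^ (n - 3) < m)%N ->
  exists p : nat, (p <= n - 3)%N /\ m = (2 ^ (n - 3) + 2 ^ p)%N.
Proof.
move=> n4 [[S [_ [Lm Lsm]]] _] mbig.
have m1 : (0 < m)%N by have := expn_gt0 2 (n - 3); lia.
have Jm : J A S m.
  rewrite /J; apply/negP => /eqP e.
  apply: (Lsm m.-1); first by lia.
  by move=> x; apply: V_inL; rewrite -e; apply: inL_V; apply: Lm.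
have d0 : (0 < \dim (V A S 0))%N.
  rewrite lt0n dimv_eq0; apply/negP => /eqP e.
  have : aone A \in V A S 0 by apply: memv_span; rewrite inE eqxx.
  rewrite e memv0 => /eqP h; move: (@aone_neq0 _ _ A (ltnW (ltnW (ltnW (ltnW n4))))).
  by rewrite h eqxx.
have dm : (\dim (V A S m) <= n)%N.
  have := dimvS (subvf (V A S m)); rewrite dimvf dim_matrix; lia.
have cm := count_dim A S m.
have [A1 _ A3] := comb (J0 A S) (@Jsplit _ _ A S) Jm.
set c := cnt (J A S) m in A1 A3 cm.
have : (2 ^ (n - 3) < 2 ^ c.-1)%N by lia.
rewrite ltn_exp2l // => hc.
have ce : c.-2 = (n - 3)%N by lia.
rewrite ce in A3; case: (A3 mbig) => p hp ->.
by exists p.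
Qed.
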